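(* If $f$ is a VCCR (over linear profiles) satisfying Coherent Defeat and Positive Involvement in Defeat, then $f$ refines the Split Cycle VCCR: $f(\mathbf P)\supseteq sc(\mathbf P)$ for every profile $\mathbf P$.
   Context: Profiles: functions $\mathbf P:V\to\mathcal L(X)$, where $V$ is a nonempty finite set of voters, $X$ a nonempty finite set of candidates (drawn from fixed infinite sets), and $\mathcal L(X)$ the strict linear orders on $X$; voter $i$ ranks $x$ above $y$ if $(x,y)\in\mathbf P(i)$. $\mathrm{Margin}_{\mathbf P}(x,y)$ = number of voters ranking $x$ above $y$ minus number ranking $y$ above $x$. A majority path from $x_1$ to $x_n$ is $(x_1,\dots,x_n)$ with $\mathrm{Margin}_{\mathbf P}(x_i,x_{i+1})>0$ for all $i<n$; its strength is the minimum of these margins. A VCCR assigns to each profile an asymmetric relation $f(\mathbf P)$ on the candidates. Split Cycle: $(x,y)\in sc(\mathbf P)$ iff $\mathrm{Margin}_{\mathbf P}(x,y)>0$ and it exceeds the strength of every majority path from $y$ to $x$. Coherent Defeat: if $\mathrm{Margin}_{\mathbf P}(x,y)>0$ and there is no majority path from $y$ to $x$, then $(x,y)\in f(\mathbf P)$. Positive Involvement in Defeat: if $(x,y)\notin f(\mathbf P)$ and $\mathbf P'$ is obtained by adding one new voter whose ballot ranks $y$ above $x$, then $(x,y)\notin f(\mathbf P')$. *)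

(* Defs.v *)
From mathcomp Require Import all_boot all_order all_algebra.
Set Implicit Arguments. Unset Strict Implicit. Unset Printing Implicit Defensive.
Import Order.TTheory GRing.Theory Num.Theory.
Local Open Scope ring_scope.

Definition strict_linear_on (X : seq nat) (r : rel nat) : Prop :=
  [/\ forall a b, r a b -> (a \in X) && (b \in X),
      forall a, ~~ r a a,
      forall a b c, r a b -> r b c -> r a c &
      forall a b, a \in X -> b \in X -> a != b -> r a b || r b a].

(* A profile: a nonempty finite set of voters V, a nonempty finite set of
   candidates X, and for each voter i in V a strict linear order
   ballot i on X ("ballot i x y" = voter i ranks x above y). *)
Record Profile := MkProfile {
  voters : seq nat;
  cands : seq nat;
  ballot : nat -> rel nat;
  voters_uniq : uniq voters;
  cands_uniq : uniq cands;
  voters_nonempty : voters != [::];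
  cands_nonempty : cands != [::];
  ballot_lin : forall i, i \in voters -> strict_linear_on cands (ballot i)
}.

Definition Margin (P : Profile) (x y : nat) : int :=
  (count (fun i => ballot P i x y) (voters P))%:Z
  - (count (fun i => ballot P i y x) (voters P))%:Z.

(* A majority path (x, s_1, ..., s_k) from x to z, k >= 1, with s_k = z:
   all candidates, and each consecutive margin is positive. *)
Definition majority_path (P : Profile) (x : nat) (s : seq nat) (z : nat) : Prop :=
  [/\ s != [::], last x s = z, all (fun c => c \in cands P) (x :: s)
    & path (fun u v => 0 < Margin P u v) x s].

Definition strength (P : Profile) (x : nat) (s : seq nat) : int :=
  match pairmap (Margin P) x s with
  | [::] => 0
  | m :: ms => foldr Order.min m ms
  end.

Definition sc (P : Profile) (x y : nat) : Prop :=
  0 < Margin P x y /\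
  forall s, majority_path P y s x -> strength P y s < Margin P x y.

Definition is_VCCR (f : Profile -> rel nat) : Prop :=
  forall P x y, f P x y -> [/\ x \in cands P, y \in cands P & ~~ f P y x].

Definition coherent_defeat (f : Profile -> rel nat) : Prop :=
  forall P x y, 0 < Margin P x y ->
    ~ (exists s, majority_path P y s x) -> f P x y.

Definition adds_voter (P P' : Profile) (i a b : nat) : Prop :=
  [/\ i \notin voters P,
      perm_eq (voters P') (i :: voters P),
      cands P' = cands P,
      (forall j, j \in voters P -> ballot P' j =2 ballot P j) &
      ballot P' i a b].

Definition positive_involvement_in_defeat (f : Profile -> rel nat) : Prop :=
  forall P P' x y i, ~~ f P x y -> adds_voter P P' i y x -> ~~ f P' x y.

(* Main.v *)
Require Import Defs.
From mathcomp Require Import all_boot all_order all_algebra.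
From mathcomp Require Import zify.
From Stdlib Require Import ClassicalEpsilon.
Set Implicit Arguments. Unset Strict Implicit. Unset Printing Implicit Defensive.
Import Order.TTheory GRing.Theory Num.Theory.
Local Open Scope ring_scope.

Definition Lseq (X : seq nat) (inA : pred nat) (x y : nat) : seq nat :=
  [seq c <- X | ~~ inA c & c != x] ++ y :: x :: [seq c <- X | inA c & c != y].

Definition Lrel (L : seq nat) : rel nat :=
  fun a b => [&& a \in L, b \in L & (index a L < index b L)%N].

Lemma Lrel_lin X L : uniq L -> L =i X -> strict_linear_on X (Lrel L).
Proof.
move=> uL eLX; split.
- by move=> a b /and3P[aL bL _]; rewrite -!eLX aL bL.
- by move=> a; rewrite /Lrel ltnn !andbF.
- move=> a b c /and3P[aL bL ab] /and3P[_ cL bc]; by rewrite /Lrel aL cL (ltn_trans ab bc).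
- move=> a b aX bX nab; rewrite -!eLX in aX bX; rewrite /Lrel aX bX /=.
  case: (ltngtP (index a L) (index b L)) => // e.
  by move: nab; rewrite -(nth_index 0 aX) e nth_index ?eqxx.
Qed.

Lemma Lrel_asym L a b : Lrel L a b -> ~~ Lrel L b a.
Proof. by case/and3P=> _ _ h; rewrite /Lrel ltnNge (ltnW h) !andbF. Qed.


Lemma Lseq_mem (X : seq nat) (inA : pred nat) (x y : nat) : x \in X -> y \in X -> Lseq X inA x y =i X.
Proof.
move=> xX yX c; rewrite /Lseq mem_cat !in_cons !mem_filter.
case: (c =P x) => [->|_]; first by rewrite xX !(orbT, orTb).
case: (c =P y) => [->|_]; first by rewrite yX !(orbT, orTb).
by case: (inA c); rewrite /= ?orbF.
Qed.

Lemma Lseq_uniq (X : seq nat) (inA : pred nat) (x y : nat) : uniq X -> x != y -> inA y -> ~~ inA x ->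
  uniq (Lseq X inA x y).
Proof.
move=> uX nxy Ay Ax; rewrite /Lseq cat_uniq /= !filter_uniq // !andbT.
rewrite !in_cons !mem_filter Ay (negbTE Ax) /= !eqxx /= eq_sym (negbTE nxy) /= andbT.
apply/hasPn => c; rewrite !mem_filter.
by move=> /andP[/andP[-> _] _].
Qed.

Lemma Lseq_yx (X : seq nat) (inA : pred nat) (x y : nat) : x != y -> inA y -> Lrel (Lseq X inA x y) y x.
Proof.
move=> nxy Ay; rewrite /Lrel /Lseq !mem_cat !in_cons !eqxx !orbT /=.
rewrite !index_cat !mem_filter Ay eqxx /= andbF /= eqxx eq_sym (negbTE nxy) /=.
by rewrite eqxx ltn_add2l.
Qed.

Lemma Lseq_vu (X : seq nat) (inA : pred nat) (x y : nat) u v : x != y -> inA y -> ~~ inA x ->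
  u \in X -> v \in X -> inA u -> ~~ inA v -> ~~ ((u == y) && (v == x)) ->
  Lrel (Lseq X inA x y) v u.
Proof.
move=> nxy Ay Ax uX vX Au Av nuv.
have hm := Lseq_mem inA (x:=x) (y:=y).
rewrite /Lrel /Lseq !mem_cat !in_cons !mem_filter uX vX Av Au /= !andbT.
rewrite !index_cat !mem_filter uX vX Av Au /= !andbT.
case: (v =P x) => [ev|nvx].
  subst v; rewrite /= !orbT /=.
  have nuy : u != y by move: nuv; rewrite eqxx andbT.
  have ux: (u == x) = false by apply/negbTE; apply/eqP=> e; move: Ax; rewrite -e Au.
  rewrite nuy !orbT /= (eq_sym y x) (negbTE nxy) eqxx (eq_sym y u) (negbTE nuy) (eq_sym x u) ux.
  by rewrite ltn_add2l.
have -> : [|| u == y, u == x | u != y] by case: (u == y); rewrite ?orbT.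
rewrite /=; apply: (leq_trans _ (leq_addr _ _)).
by rewrite index_mem mem_filter Av vX andbT; apply/eqP.
Qed.

Fixpoint vs (V : seq nat) (M n : nat) : seq nat :=
  if n is n'.+1 then (M + n')%N :: vs V M n' else V.

Definition Mx (P : Profile) : nat := (sumn (voters P)).+1.

Lemma le_sumn (s : seq nat) i : i \in s -> (i <= sumn s)%N.
Proof.
elim: s => //= a s IH; rewrite in_cons; case/orP=> [/eqP->|/IH h]; first exact: leq_addr.
exact: leq_trans h (leq_addl _ _).
Qed.

Lemma Mx_gt P i : i \in voters P -> (i < Mx P)%N.
Proof. by move/le_sumn. Qed.

Lemma vs_lt P n i : i \in vs (voters P) (Mx P) n -> (i < Mx P + n)%N.
Proof.
elim: n i => [|n IH] i /=; first by rewrite addn0; apply: Mx_gt.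
rewrite in_cons; case/orP=> [/eqP->|/IH h]; first by rewrite addnS.
by rewrite addnS ltnS ltnW.
Qed.

Lemma vs_notin P n : (Mx P + n)%N \notin vs (voters P) (Mx P) n.
Proof. by apply/negP=> /vs_lt; rewrite ltnn. Qed.

Lemma Mx_notin P n : (Mx P + n)%N \notin voters P.
Proof. by apply/negP=> /Mx_gt; rewrite ltnNge leq_addr. Qed.

Lemma vs_uniq P n : uniq (vs (voters P) (Mx P) n).
Proof. elim: n => [|n IH] /=; [exact: voters_uniq | by rewrite vs_notin]. Qed.

Lemma vs_ne P n : vs (voters P) (Mx P) n != [::].
Proof. by case: n => [|n] //=; exact: voters_nonempty. Qed.

Definition bal (P : Profile) (r : rel nat) (i : nat) : rel nat :=
  if i \in voters P then ballot P i else r.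

Lemma bal_lin P r (hr : strict_linear_on (cands P) r) n i :
  i \in vs (voters P) (Mx P) n -> strict_linear_on (cands P) (bal P r i).
Proof.
move=> _; rewrite /bal; case: ifP => // iV; exact: ballot_lin.
Qed.

Definition mk P r (hr : strict_linear_on (cands P) r) n : Profile :=
  @MkProfile (vs (voters P) (Mx P) n) (cands P) (bal P r) (vs_uniq P n)
    (cands_uniq P) (vs_ne P n) (cands_nonempty P) (@bal_lin P r hr n).

Lemma count_vs P r n a b :
  count (fun i => bal P r i a b) (vs (voters P) (Mx P) n) =
  (count (fun i => ballot P i a b) (voters P) + n * r a b)%N.
Proof.
elim: n => [|n IH] /=.
  rewrite mul0n addn0; apply: eq_in_count => i iV; by rewrite /bal iV.
rewrite IH {1}/bal (negbTE (Mx_notin P n)) mulSn; lia.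
Qed.

Lemma Margin_vs P r n Q a b :
  voters Q = vs (voters P) (Mx P) n ->
  (forall j, j \in voters Q -> ballot Q j =2 bal P r j) ->
  Margin Q a b = Margin P a b + (n * r a b)%N%:Z - (n * r b a)%N%:Z.
Proof.
move=> eV eB; rewrite /Margin.
have e : forall a b, count (fun i => ballot Q i a b) (voters Q) =
  (count (fun i => ballot P i a b) (voters P) + n * r a b)%N.
  move=> c d; rewrite -count_vs -eV; apply: eq_in_count => i iQ; exact: eB.
rewrite !e !PoszD; lia.
Qed.

Lemma adds_mk P r hr n Q x y :
  voters Q = vs (voters P) (Mx P) n -> cands Q = cands P ->
  (forall j, j \in voters Q -> ballot Q j =2 bal P r j) -> r y x ->
  adds_voter Q (@mk P r hr n.+1) (Mx P + n) y x.
Proof.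
move=> eV eC eB ryx; split => //=.
- by rewrite eV vs_notin.
- by rewrite eV.
- by move=> j jQ a b; rewrite eB.
- by rewrite /bal (negbTE (Mx_notin P n)).
Qed.

Lemma Margin_anti P x y : Margin P y x = - Margin P x y.
Proof. by rewrite /Margin opprB. Qed.

Lemma Margin_pos_cands P x y : 0 < Margin P x y -> (x \in cands P) && (y \in cands P).
Proof.
rewrite /Margin => h.
have : has (fun i => ballot P i x y) (voters P).
  rewrite has_count lt0n; apply/negP=> /eqP e; move: h; rewrite e /=; lia.
case/hasP=> i iV bi; have [h1 _ _ _] := ballot_lin iV; exact: h1 bi.
Qed.

Lemma foldr_min_ge (k : int) ms m : k <= m -> all (fun z => k <= z) ms ->
  k <= foldr Order.min m ms.
Proof.
elim: ms => //= z ms IH km /andP[kz hms]; rewrite le_min kz; exact: IH.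
Qed.

Lemma path_pairmap_ge P (k : int) y s :
  path (fun u v => k <= Margin P u v) y s -> all (fun z => k <= z) (pairmap (Margin P) y s).
Proof. by elim: s y => //= a s IH y /andP[-> /IH]. Qed.

Lemma strength_ge P (k : int) y s :
  path (fun u v => k <= Margin P u v) y s -> s != [::] -> k <= strength P y s.
Proof.
move=> /path_pairmap_ge; rewrite /strength; case: s => //= a s /andP[h1 h2] _.
exact: foldr_min_ge.
Qed.

Theorem theorem4p5 (f : Profile -> rel nat) :
  is_VCCR f -> coherent_defeat f -> positive_involvement_in_defeat f ->
  forall P x y, sc P x y -> f P x y.
Proof.
move=> _ hCD hPI P x y [hm hsc].
case Ef: (f P x y) => //; have nf : ~~ f P x y by rewrite Ef.
exfalso.
have /andP[xC yC] := Margin_pos_cands hm.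
have nxy : x != y by apply/eqP=> e; move: hm; rewrite e /Margin subrr.
have [m em] : exists m, Margin P x y = (m.+1)%:Z.
  move: hm; case: (Margin P x y) => [[|m]|m] //= _; by exists m.
pose A := fun a => exists s, [/\ path (fun u v => (m.+1)%:Z <= Margin P u v) y s,
   all (fun c => c \in cands P) s & last y s = a].
pose inA := fun a => if excluded_middle_informative (A a) then true else false.
have inAP : forall a, inA a <-> A a.
  by move=> a; rewrite /inA; case: excluded_middle_informative.
have Ay : inA y by apply/inAP; exists [::].
have Acl : forall a b, inA a -> b \in cands P -> (m.+1)%:Z <= Margin P a b -> inA b.
  move=> a b /inAP[s [h1 h2 h3]] bC hab; apply/inAP; exists (rcons s b); split.
  - by rewrite rcons_path h1 h3.
  - by rewrite all_rcons bC h2.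
  - by rewrite last_rcons.
have Ax : ~~ inA x.
  apply/negP=> /inAP[s [h1 h2 h3]].
  have sne : s != [::] by case: s h3 h1 h2 => //= e; move: nxy; rewrite e eqxx.
  have := hsc s; rewrite em; move=> /(_ _) h.
  have : (m.+1)%:Z <= strength P y s by apply: strength_ge.
  rewrite leNgt h //; split => //=; first by rewrite yC.
  by apply: sub_path h1 => u v /= huv; apply: lt_le_trans huv.
have Acands : forall a, inA a -> a \in cands P.
  move=> a /inAP[s [_ h2 h3]]; rewrite -h3.
  have := mem_last y s; rewrite in_cons; case/orP => [/eqP->//|]; exact: (allP h2).
pose L := Lseq (cands P) inA x y.
have hr : strict_linear_on (cands P) (Lrel L).
  apply: Lrel_lin; [exact: Lseq_uniq (cands_uniq P) nxy Ay Ax | exact: Lseq_mem].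
pose Q := fun k => if k is 0 then P else @mk P (Lrel L) hr k.
have QV : forall k, voters (Q k) = vs (voters P) (Mx P) k by case.
have QC : forall k, cands (Q k) = cands P by case.
have QB : forall k j, j \in voters (Q k) -> ballot (Q k) j =2 bal P (Lrel L) j.
  by case => [|k] j //= jV a b; rewrite /bal jV.
have QM : forall k a b, Margin (Q k) a b =
    Margin P a b + (k * Lrel L a b)%N%:Z - (k * Lrel L b a)%N%:Z.
  by move=> k a b; exact: (Margin_vs a b (QV k) (QB k)).
have nfQ : forall k, ~~ f (Q k) x y.
  elim=> [|k IH] //; apply: (hPI _ _ _ _ _ IH); apply: adds_mk => //.
  - exact: QB.
  - exact: Lseq_yx.
have ryx : Lrel L y x by exact: Lseq_yx.
have rxy : Lrel L x y = false by apply/negbTE; exact: Lrel_asym.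
suff hf : f (Q m) x y by move: (nfQ m); rewrite hf.
apply: hCD.
  rewrite QM em ryx rxy muln0 muln1; lia.
case=> s [sne ls /= /andP[_ hc] hp].
rewrite QC in hc.
have stay : forall u s, inA u -> path (fun a b => 0 < Margin (Q m) a b) u s ->
    all (fun c => c \in cands P) s -> all inA s.
  move=> u0 s0; elim: s0 u0 => //= v s0 IH u Au /andP[huv hp0] /andP[vC hc0].
  suff Av : inA v by rewrite Av (IH v).
  case Av: (inA v) => //; exfalso.
  move: huv; rewrite QM.
  case: (boolP ((u == y) && (v == x))) => [/andP[/eqP eu /eqP ev]|nuv].
    rewrite eu ev ryx rxy Margin_anti em muln0 muln1 => h. clear -h; lia.
  have rvu : Lrel L v u by apply: Lseq_vu => //; [exact: Acands | rewrite Av].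
  have ruv : Lrel L u v = false by apply/negbTE; exact: Lrel_asym.
  rewrite rvu ruv /= => h.
  have : inA v by apply: (Acl u) => //; clear -h; lia.
  by rewrite Av.
have hA := stay y s Ay hp hc.
have := mem_last y s; rewrite ls in_cons (negbTE nxy) /= => /(allP hA).
by rewrite (negbTE Ax).
Qed.
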